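(* Let $p_1\in[0,1]$, $\alpha_1=2p_1-1$, and let $d_n(k)$ and $\tilde S^{(k)}$ be as in the context. Then, as $n\to\infty$, $$\sum_{k=1}^n\mathbb E\big(\tilde S^{(k)}_{d_n(k)}\big)^2=n(1+2\alpha_1^2)+O(\log^2 n).$$
   Context: Let $(u_j)_{j\ge1}$ be independent random variables with $u_j$ uniform on $\{1,\dots,j\}$. For $n\ge k\ge1$ let $d_n(k):=\#\{j\in\{k,\dots,n-1\}:u_j=k\}$ (so $d_n(n)=0$); i.e. $d_n(k)$ is the out-degree of vertex $k$ in the random recursive tree on $\{1,\dots,n\}$ where vertex $j+1$ attaches to $u_j$. Let $(\tilde S^{(k)})_{k\ge1}$ be independent random walks, independent of $(u_j)$, each with $\tilde S^{(k)}_0=0$ and i.i.d. increments equal to $+1$ with probability $p_1$ and $-1$ with probability $1-p_1$. *)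

(* Defs.v *)
From HB Require Import structures.
From mathcomp Require Import all_boot all_order all_algebra.
From mathcomp Require Import reals exp.
Set Implicit Arguments. Unset Strict Implicit. Unset Printing Implicit Defensive.
Import Order.TTheory GRing.Theory Num.Theory.
Local Open Scope ring_scope.

(* Finite model of (u_1,...,u_{n-1}): a function u : 'I_(n-1) -> 'I_n where
   index i (0-based) stands for j = i+1 and value u i stands for u_j = (u i)+1.
   Valid configurations satisfy u i <= i, i.e. u_j in {1,...,j}. *)
Definition rrt_valid (n : nat) (u : {ffun 'I_n.-1 -> 'I_n}) : bool :=
  [forall i, (nat_of_ord (u i) <= nat_of_ord i)%N].

Definition rrt_prob (R : realType) (n : nat) (u : {ffun 'I_n.-1 -> 'I_n}) : R :=
  if rrt_valid u then \prod_(i < n.-1) (i.+1%:R)^-1 else 0.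

(* d_n(k) = #{ j in {k..n-1} : u_j = k }, for k >= 1 (1-based vertex label). *)
Definition outdeg (n : nat) (u : {ffun 'I_n.-1 -> 'I_n}) (k : nat) : nat :=
  #|[set i : 'I_n.-1 | (nat_of_ord (u i) == k.-1)%N]|.

Definition step_prob (R : realType) (p : R) (n : nat)
    (eps : {ffun 'I_n.-1 -> bool}) : R :=
  \prod_(i < n.-1) (if eps i then p else 1 - p).

Definition walk_pos (R : realType) (n : nat) (eps : {ffun 'I_n.-1 -> bool})
    (m : nat) : R :=
  \sum_(i < n.-1 | (nat_of_ord i < m)%N) (if eps i then 1 else -1).

(* E( S^{(k)}_{d_n(k)} )^2, computed over the (finite) joint law of
   (u_1..u_{n-1}) and the first n-1 increments of the independent walk S^{(k)}
   (only these matter since d_n(k) <= n-1). *)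
Definition ES2 (R : realType) (p : R) (n k : nat) : R :=
  \sum_(u : {ffun 'I_n.-1 -> 'I_n}) \sum_(eps : {ffun 'I_n.-1 -> bool})
    @rrt_prob R n u * @step_prob R p n eps * (@walk_pos R n eps (outdeg u k)) ^+ 2.

(* Main.v *)
Require Import Defs.
From HB Require Import structures.
From mathcomp Require Import all_boot all_order all_algebra.
From mathcomp Require Import reals exp.
From mathcomp Require Import ring lra.
Import Order.TTheory GRing.Theory Num.Theory.
Local Open Scope ring_scope.
Section Gen.
Context {R : realType}.

Lemma prod_sum (I J : finType) (F : I -> J -> R) :
  \sum_(f : {ffun I -> J}) \prod_i F i (f i) = \prod_i \sum_j F i j.
Proof. by rewrite bigA_distr_bigA. Qed.

Lemma prod_if1 (I : finType) (a : I) (x : I -> R) :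
  \prod_i (if i == a then x i else 1) = x a.
Proof. by rewrite -big_mkcond big_pred1_eq. Qed.

Lemma pair_exp (I J : finType) (w : I -> J -> R)
  (hw : forall i, \sum_j w i j = 1) (a b : I) (g g' : J -> R) :
  \sum_(f : {ffun I -> J}) (\prod_i w i (f i)) * (g (f a) * g' (f b)) =
  if a == b then \sum_j w a j * (g j * g' j)
  else (\sum_j w a j * g j) * (\sum_j w b j * g' j).
Proof.
pose F i j := w i j * (if i == a then g j else 1) * (if i == b then g' j else 1).
have -> : \sum_(f : {ffun I -> J}) (\prod_i w i (f i)) * (g (f a) * g' (f b))
   = \sum_(f : {ffun I -> J}) \prod_i F i (f i).
  apply: eq_bigr => f _; rewrite /F !big_split /=.
  rewrite (@prod_if1 _ a (fun i => g (f i))) (@prod_if1 _ b (fun i => g' (f i))).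
  by rewrite mulrA.
rewrite prod_sum (bigD1 a) //=.
case: (eqVneq a b) => [eab|nab].
  subst b.
  rewrite [X in _ * X = _]big1 ?mulr1; last first.
    move=> i; rewrite ?andTb => /negbTE ia; rewrite -(hw i); apply: eq_bigr => j _; rewrite /F ia /= !mulr1 //.
  by apply: eq_bigr => j _; rewrite /F eqxx mulrA.
rewrite (bigD1 b) /=; last by rewrite eq_sym.
rewrite [X in _ * (_ * X) = _]big1 ?mulr1; last first.
  move=> i; rewrite ?andTb => /andP[/negbTE ia /negbTE ib]; rewrite -(hw i); apply: eq_bigr => j _; rewrite /F ia ib /= !mulr1 //.
congr (_ * _); apply: eq_bigr => j _; rewrite /F eqxx.
  by rewrite (negbTE nab) mulr1.
by rewrite eq_sym (negbTE nab) mulr1.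
Qed.
End Gen.
Lemma sum_ord_eqR (R : realType) (m : nat) (i : 'I_m) (c : R) :
  \sum_(j < m) (if i == j then 1 else c) = 1 + (m.-1)%:R * c.
Proof.
rewrite (bigD1 i) //= eqxx; congr (_ + _).
rewrite (eq_bigr (fun=> c)); last by move=> j /negbTE; rewrite eq_sym => ->.
by rewrite sumr_const cardC1 card_ord mulr_natl.
Qed.

Lemma walk_exp (R : realType) (p : R) (n m : nat) : (m <= n.-1)%N ->
  \sum_eps @step_prob R p n eps * (@walk_pos R n eps m) ^+ 2 =
  m%:R * (1 - (2 * p - 1) ^+ 2) + m%:R ^+ 2 * (2 * p - 1) ^+ 2.
Proof.
move=> hm.
pose x := fun b : bool => (if b then 1 else -1) : R.
pose w := fun (i : 'I_n.-1) (b : bool) => if b then p else 1 - p.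
have hw : forall i, \sum_b w i b = 1.
  by move=> i; rewrite big_bool /w /=; ring.
have E1 : forall eps, (@walk_pos R n eps m) ^+ 2 =
   \sum_(i < n.-1 | (i < m)%N) \sum_(j < n.-1 | (j < m)%N) (x (eps i) * x (eps j)).
  move=> eps; rewrite expr2 /walk_pos big_distrl /=; apply: eq_bigr => i _.
  by rewrite big_distrr.
under eq_bigr => eps _ do rewrite E1 big_distrr /=.
rewrite exchange_big /=.
under eq_bigr => i _ do (under eq_bigr => eps _ do rewrite big_distrr /=; rewrite exchange_big /=).
under eq_bigr => i _ do (under eq_bigr => j _ do
   rewrite (@pair_exp R _ _ w hw i j x x)).
have -> : \sum_(i < n.-1 | (i < m)%N) \sum_(j < n.-1 | (j < m)%N)
   (if i == j then \sum_j0 w i j0 * (x j0 * x j0)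
    else (\sum_j0 w i j0 * x j0) * (\sum_j0 w j j0 * x j0)) =
   \sum_(i < n.-1 | (i < m)%N) \sum_(j < n.-1 | (j < m)%N)
   (if (i:nat) == j then 1 else (2 * p - 1) ^+ 2).
  apply: eq_bigr => i _; apply: eq_bigr => j _.
  rewrite !big_bool /w /x /=; case: eqP => [-> | nij].
    rewrite eqxx !mulr1 mulrN1 opprK; ring.
  case: eqP => [eij|_]; first by case: nij; apply: val_inj.
  by rewrite !mulr1 !mulrN1 expr2; congr (_ * _); ring.
rewrite -(big_ord_widen _ (fun i => \sum_(j < n.-1 | (j < m)%N)
   (if i == j then 1 else (2 * p - 1) ^+ 2)) hm).
under eq_bigr => i _ do rewrite -(big_ord_widen _ (fun j => (if (i:nat) == j then 1 else (2 * p - 1) ^+ 2)) hm).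
under eq_bigr => i _ do rewrite (@sum_ord_eqR R m i).
rewrite sumr_const card_ord.
clear E1; case: m hm => [|m] hm; first by rewrite !mulr0n mul0r expr0n /= mul0r addr0.
rewrite /= -mulr_natr -addn1 natrD; ring.
Qed.
Section T.
Context {R : realType}.
Definition Tf (i j : nat) : R := if i == j then 1 else ((maxn i j).+1%:R)^-1.
Definition Hn (N : nat) : R := \sum_(i < N) ((i.+1)%:R)^-1.

Lemma sumT N : \sum_(i < N) \sum_(j < N) Tf i j = 3 * N%:R - 2 * Hn N.
Proof.
elim: N => [|N IH]; first by rewrite !big_ord0 /Hn big_ord0; ring.
rewrite big_ord_recr /=.
under eq_bigr => i _ do rewrite big_ord_recr /=.
rewrite big_split /= IH big_ord_recr /= /Hn big_ord_recr /=.
have -> : \sum_(i < N) Tf i N = N%:R * (N.+1%:R)^-1.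
  rewrite (eq_bigr (fun=> (N.+1%:R)^-1 : R)); last first.
    move=> i _; rewrite /Tf ltn_eqF // (maxn_idPr (ltnW (ltn_ord i))) //.
  by rewrite sumr_const card_ord mulr_natl.
have -> : \sum_(j < N) Tf N j = N%:R * (N.+1%:R)^-1.
  rewrite (eq_bigr (fun=> (N.+1%:R)^-1 : R)); last first.
    move=> i _; rewrite /Tf gtn_eqF // (maxn_idPl (ltnW (ltn_ord i))) //.
  by rewrite sumr_const card_ord mulr_natl.
rewrite /Tf eqxx.
have hN : (N.+1%:R : R) != 0 by rewrite pnatr_eq0.
rewrite -addn1 natrD in hN *.
by field.
Qed.
End T.
Section Tree.
Context {R : realType}.
Variable n : nat.

Definition wt (i : 'I_n.-1) (v : 'I_n) : R := ((v : nat) <= i)%:R / (i.+1)%:R.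

Lemma count_le (c : nat) : (c < n)%N ->
  \sum_(v < n) (((v : nat) <= c)%:R : R) = (c.+1)%:R.
Proof.
move=> hc.
have -> : \sum_(v < n) (((v : nat) <= c)%:R : R) = \sum_(v < n | (v < c.+1)%N) (1 : R).
  rewrite [RHS]big_mkcond /=; apply: eq_bigr => v _; by rewrite ltnS; case: leqP.
by rewrite -(big_ord_widen n (fun=> 1 : R) hc) sumr_const card_ord.
Qed.

Lemma hwt i : \sum_v wt i v = 1.
Proof.
have hi : (i < n)%N by apply: (leq_trans (ltn_ord i)); exact: leq_pred.
by rewrite /wt -big_distrl /= count_le ?divff // ?pnatr_eq0 //.
Qed.

Lemma rrt_prodE (u : {ffun 'I_n.-1 -> 'I_n}) : rrt_prob R u = \prod_i wt i (u i).
Proof.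
rewrite /rrt_prob /wt; case: ifP => hv.
  apply: eq_bigr => i _; move/forallP: hv => /(_ i) ->; by rewrite mul1r.
move/negbT: hv; rewrite negb_forall => /existsP [i hi].
rewrite (bigD1 i) //= (negbTE hi) mul0r mul0r //.
Qed.

Lemma sum_prob : \sum_(u : {ffun 'I_n.-1 -> 'I_n}) rrt_prob R u = 1.
Proof.
under eq_bigr => u _ do rewrite rrt_prodE.
by rewrite prod_sum big1 // => i _; exact: hwt.
Qed.

Lemma outdegE (u : {ffun 'I_n.-1 -> 'I_n}) k :
  ((outdeg u k)%:R : R) = \sum_i (((u i : nat) == k.-1)%:R).
Proof.
rewrite /outdeg -sum1dep_card natr_sum [LHS]big_mkcond /=.
by apply: eq_bigr => i _; case: ifP.
Qed.

Lemma sum_outdeg (u : {ffun 'I_n.-1 -> 'I_n}) :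
  \sum_(1 <= k < n.+1) ((outdeg u k)%:R : R) = (n.-1)%:R.
Proof.
rewrite big_add1 /= big_mkord.
under eq_bigr => k _ do rewrite outdegE /=.
rewrite exchange_big /= (eq_bigr (fun=> 1)); first by rewrite sumr_const card_ord.
move=> i _; rewrite (bigD1 (u i)) //= eqxx big1 ?addr0 //.
by move=> k; rewrite val_eqE eq_sym => /negbTE ->.
Qed.

Lemma sum_outdeg2 (u : {ffun 'I_n.-1 -> 'I_n}) :
  \sum_(1 <= k < n.+1) ((outdeg u k)%:R : R) ^+ 2 =
  \sum_(c < n) \sum_i \sum_j ((((u i : nat) == c)%:R : R) * (((u j : nat) == c)%:R)).
Proof.
rewrite big_add1 /= big_mkord; apply: eq_bigr => c _.
rewrite outdegE /= expr2 big_distrl /=; apply: eq_bigr => i _.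
by rewrite big_distrr.
Qed.

Lemma sum_ind (f : 'I_n -> R) (c : 'I_n) :
  \sum_v f v * (((v : nat) == c)%:R) = f c.
Proof.
rewrite (bigD1 c) //= eqxx mulr1 big1 ?addr0 //.
by move=> v; rewrite val_eqE => /negbTE ->; rewrite mulr0.
Qed.

Lemma sum_ww (i j : 'I_n.-1) : \sum_(c < n) wt i c * wt j c = ((maxn i j).+1%:R)^-1.
Proof.
rewrite /wt.
have -> : \sum_(c < n) (((c:nat) <= i)%:R / (i.+1)%:R * (((c:nat) <= j)%:R / (j.+1)%:R) : R)
  = (\sum_(c < n) (((c:nat) <= minn i j)%:R : R)) / ((i.+1)%:R * (j.+1)%:R).
  rewrite big_distrl /=; apply: eq_bigr => c _.
  rewrite leq_min; case: (_ <= i)%N; case: (_ <= j)%N; rewrite /= ?mul0r ?mulr0 ?mul1r //.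
  by rewrite invfM.
have hm : (minn i j < n)%N.
  apply: leq_ltn_trans (geq_minl i j) _; apply: (leq_trans (ltn_ord i)); exact: leq_pred.
rewrite count_le //.
have hi : (1 + i%:R : R) != 0 by rewrite addrC natr1 pnatr_eq0.
have hj : (1 + j%:R : R) != 0 by rewrite addrC natr1 pnatr_eq0.
case: (leqP i j) => hij.
  by field; rewrite hi hj.
by field; rewrite hi hj.
Qed.

Lemma tree_exp2 :
  \sum_(u : {ffun 'I_n.-1 -> 'I_n}) rrt_prob R u *
     \sum_(1 <= k < n.+1) ((outdeg u k)%:R : R) ^+ 2
  = 3 * (n.-1)%:R - 2 * Hn n.-1.
Proof.
under eq_bigr => u _ do rewrite sum_outdeg2 rrt_prodE big_distrr /=.
rewrite exchange_big /=.
under eq_bigr => c _ do (under eq_bigr => u _ do rewrite big_distrr /=; rewrite exchange_big /=).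
under eq_bigr => c _ do (under eq_bigr => i _ do (under eq_bigr => u _ do rewrite big_distrr /=; rewrite exchange_big /=)).
under eq_bigr => c _ do (under eq_bigr => i _ do (under eq_bigr => j _ do
   rewrite (@pair_exp R _ _ wt hwt i j (fun v => (((v : nat) == c)%:R)) (fun v => (((v : nat) == c)%:R))))).
rewrite -sumT exchange_big /=; apply: eq_bigr => i _.
rewrite exchange_big /=; apply: eq_bigr => j _.
rewrite /Tf; case: (eqVneq i j) => [->|nij].
  rewrite eqxx; under eq_bigr => c _ do (under eq_bigr => v _ do rewrite -natrM mulnb andbb; rewrite sum_ind).
  exact: hwt.
have nij' : ((i:nat) == j) = false by rewrite val_eqE; exact: negbTE.
rewrite nij' -sum_ww; apply: eq_bigr => c _.
by rewrite !sum_ind.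
Qed.
End Tree.
Section Logs.
Context {R : realType}.

Lemma ln_step (N : nat) : (0 < N)%N ->
  ((N.+1)%:R : R)^-1 <= ln (N.+1%:R : R) - ln (N%:R : R).
Proof.
move=> hN.
have hN0 : (0 : R) < N%:R by rewrite ltr0n.
have hN1 : (0 : R) < N.+1%:R by rewrite ltr0n.
have h1 : (-1 : R) < - (N.+1%:R)^-1.
  rewrite ltrN2 invf_lt1 // ltr1n ltnS //.
have := le_ln1Dx h1.
have -> : 1 - (N.+1%:R : R)^-1 = N%:R / N.+1%:R.
  rewrite -natr1; field; rewrite natr1 pnatr_eq0 //.
rewrite ln_div ?posrE // => h.
by rewrite -lerN2 opprB.
Qed.

Lemma Hn_bound (M : nat) : Hn M.+1 <= 1 + ln (M.+1%:R : R).
Proof.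
elim: M => [|M IH].
  by rewrite /Hn big_ord_recr big_ord0 /= ln1 add0r addr0 invr1.
rewrite /Hn big_ord_recr /= -/(Hn M.+1).
have := ln_step M.+1 (ltn0Sn M).
set c := (M.+2%:R : R)^-1; move=> h; lra.
Qed.

Lemma ln_mono (N : nat) : (0 < N)%N -> ln (N%:R : R) <= ln (N.+1%:R : R).
Proof.
move=> hN; have := ln_step N hN.
have : (0 : R) <= (N.+1%:R)^-1 by rewrite invr_ge0 ler0n.
set c := (N.+1%:R : R)^-1; move=> h h'; lra.
Qed.
End Logs.
Lemma ES2_total (R : realType) (p : R) (n : nat) :
  \sum_(1 <= k < n.+1) ES2 p n k =
  (n.-1)%:R * (1 + 2 * (2 * p - 1) ^+ 2) - 2 * (2 * p - 1) ^+ 2 * Hn n.-1.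
Proof.
set a := (2 * p - 1) ^+ 2.
have E : forall k, ES2 p n k = \sum_(u : {ffun 'I_n.-1 -> 'I_n}) rrt_prob R u *
    ((outdeg u k)%:R * (1 - a) + (outdeg u k)%:R ^+ 2 * a).
  move=> k; rewrite /ES2; apply: eq_bigr => u _.
  under eq_bigr => eps _ do rewrite -mulrA.
  rewrite -big_distrr /= walk_exp -/a; first by rewrite mulrC.
  by rewrite /outdeg; apply: leq_trans (max_card _) _; rewrite card_ord.
under eq_bigr => k _ do rewrite E.
rewrite exchange_big /=.
have E2 : forall u : {ffun 'I_n.-1 -> 'I_n},
  \sum_(1 <= k < n.+1) rrt_prob R u *
    ((outdeg u k)%:R * (1 - a) + (outdeg u k)%:R ^+ 2 * a)
  = rrt_prob R u * ((1 - a) * (n.-1)%:R) + a * (rrt_prob R u *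
     \sum_(1 <= k < n.+1) ((outdeg u k)%:R : R) ^+ 2).
  move=> u; rewrite -big_distrr /= big_split /= -!big_distrl /= sum_outdeg.
  ring.
under eq_bigr => u _ do rewrite E2.
rewrite big_split /= -big_distrl /= sum_prob -big_distrr /= tree_exp2.
ring.
Qed.
Theorem lemma2p3 (R : realType) (p1 : R) (hp0 : 0 <= p1) (hp1 : p1 <= 1) :
  exists (C : R) (N : nat), forall n : nat, (N <= n)%N ->
    `| \sum_(1 <= k < n.+1) ES2 p1 n k
       - n%:R * (1 + 2 * (2 * p1 - 1) ^+ 2) | <= C * (ln (n%:R : R)) ^+ 2.
Proof.
exists 24, 2%N => n hn.
rewrite ES2_total.
case: n hn => [|[|m]] // _.
rewrite /=.
have hH0 : 0 <= Hn m.+1 :> R.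
  by rewrite /Hn; apply: sumr_ge0 => i _; rewrite invr_ge0 ler0n.
have hH1 := @Hn_bound R m.
have hL1 : ln (m.+1%:R : R) <= ln (m.+2%:R) := ln_mono m.+1 (ltn0Sn m).
have hL2 : 1 / 2 <= ln (m.+2%:R : R).
  have h2 : (2%:R : R)^-1 <= ln (2%:R : R) - ln 1 := ln_step 1 (ltn0Sn 0).
  rewrite ln1 subr0 in h2.
  apply: le_trans (_ : ln (2%:R : R) <= _).
    by move: h2; rewrite div1r.
  by rewrite ler_ln ?posrE ?ltr0n // ler_nat.
have ha0 : 0 <= (2 * p1 - 1) ^+ 2 by rewrite sqr_ge0.
have ha1 : (2 * p1 - 1) ^+ 2 <= 1.
  have h1p : 0 <= 1 - p1 by rewrite subr_ge0.
  have h := mulr_ge0 hp0 h1p.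
  rewrite expr2; nra.
have haH : (2 * p1 - 1) ^+ 2 * Hn m.+1 <= Hn m.+1.
  by rewrite ler_piMl.
set a := (2 * p1 - 1) ^+ 2 in ha0 ha1 haH *.
set H := Hn m.+1 in hH0 hH1 haH *.
set L := ln (m.+2%:R : R) in hL1 hL2 *.
set L1 := ln (m.+1%:R : R) in hH1 hL1 *.
have -> : (m.+2%:R : R) = m.+1%:R + 1 by rewrite -natr1.
set M := (m.+1%:R : R).
have hsq : 0 <= (L - 1/2) * (24 * L + 10).
  apply: mulr_ge0; lra.
rewrite ler_norml; apply/andP; split; nra.
Qed.
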